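(* Let $G$ be a finite graph such that no connected component of $\mathcal{I}^1_{\mathrm{AR}}(G)$ is an even cycle. Then the partition $V_1,\dots,V_{\alpha(G)}$ of $V(\mathcal{I}^1_{\mathrm{AR}}(G))$, where $V_i$ is the set of independent sets of $G$ of size $i$, is the unique layering of $\mathcal{I}^1_{\mathrm{AR}}(G)$.
   Context: $\alpha(G)$ is the maximum size of an independent set of $G$. $\mathcal{I}^1_{\mathrm{AR}}(G)$ is the graph whose vertices are the nonempty independent sets of $G$, two being adjacent iff their symmetric difference has exactly one element. A layering of a graph $H$ is a partition of $V(H)$ into an ordered sequence of parts (layers) $V_1,\dots,V_p$ such that: (1) each layer is an independent set of $H$; (2) every edge of $H$ joins vertices in consecutive layers $V_i,V_{i+1}$; (3) for $2\le i\le p$, each vertex of $V_i$ has exactly $i$ neighbours in $V_{i-1}$; (4) for $1\le i\le p$, any two vertices of $V_i$ have at most one common neighbour in $V_{i-1}$ and at most one common neighbour in $V_{i+1}$. *)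

(* Defs.v *)
From mathcomp Require Import all_boot.
Set Implicit Arguments. Unset Strict Implicit. Unset Printing Implicit Defensive.

Definition simple_graph (T : finType) (e : rel T) : Prop :=
  symmetric e /\ irreflexive e.

Definition indep (T : finType) (e : rel T) (A : {set T}) : bool :=
  [forall x in A, forall y in A, ~~ e x y].

Definition alpha (T : finType) (e : rel T) : nat :=
  \max_(A : {set T} | indep e A) #|A|.

(* Vertices of I^1_AR(G): nonempty independent sets of G. *)
Definition IAR_vert (T : finType) (e : rel T) :=
  {A : {set T} | indep e A && (A != set0)}.

Definition IAR_adj (T : finType) (e : rel T) : rel (IAR_vert e) :=
  fun A B => #|(val A :\: val B) :|: (val B :\: val A)| == 1.

Definition component (V : finType) (adj : rel V) (v : V) : {set V} :=
  [set u | connect adj v u].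

Definition induces_cycle (V : finType) (adj : rel V) (C : {set V}) (n : nat)
  : Prop :=
  3 <= n /\
  exists f : 'I_n -> V,
    injective f /\ C = [set f i | i in 'I_n] /\
    (forall i j : 'I_n,
       adj (f i) (f j) <-> (j = (i + 1) %% n :> nat \/ i = (j + 1) %% n :> nat)).

Definition is_even_cycle (V : finType) (adj : rel V) (C : {set V}) : Prop :=
  exists n, ~~ odd n /\ induces_cycle adj C n.

(* A layering of H = (V, adj) with p layers, given as the layer-index map
   L : V -> nat (vertex v lies in layer V_(L v)), layers V_1, ..., V_p.
   The layers form a partition into nonempty parts. *)
Definition is_layering (V : finType) (adj : rel V) (p : nat) (L : V -> nat)
  : Prop :=
  (forall v, 1 <= L v <= p) /\
  (forall i, 1 <= i <= p -> exists v, L v = i) /\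
  (forall u v, adj u v -> L u != L v) /\
  (forall u v, adj u v -> L v = (L u).+1 \/ L u = (L v).+1) /\
  (* (3) each vertex of V_i, i >= 2, has exactly i neighbours in V_(i-1) *)
  (forall v, 2 <= L v -> #|[set u | adj v u & L u == (L v).-1]| = L v) /\
  (* (4) two vertices of V_i have at most one common neighbour in V_(i-1)
         and at most one common neighbour in V_(i+1) *)
  (forall u v, u != v -> L u = L v ->
     #|[set w | [&& adj u w, adj v w & L w == (L u).-1]]| <= 1 /\
     #|[set w | [&& adj u w, adj v w & L w == (L u).+1]]| <= 1).

(* Main.v *)
Require Import Defs.
From mathcomp Require Import all_boot zify.
From Stdlib Require Import FunctionalExtensionality.
Set Implicit Arguments. Unset Strict Implicit. Unset Printing Implicit Defensive.


Section Cycle.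
Variables (V : finType) (adj : rel V).
Hypothesis adj_sym : symmetric adj.
Hypothesis adj_irr : irreflexive adj.
Variable par : V -> bool.
Hypothesis par_adj : forall u v, adj u v -> par u != par v.
Variable Q : pred V.
Hypothesis HQ : forall u, Q u -> exists a b, [/\ a != b, adj u a, adj u b,
   (forall w, adj u w -> w = a \/ w = b) & (Q a /\ Q b)].

Lemma Qnb u w : Q u -> adj u w -> Q w.
Proof.
move=> /HQ [a [b [_ _ _ H [Qa Qb]]]] /H [] e1; by rewrite e1.
Qed.

Definition other (u w : V) : V := odflt u [pick y | adj u y && (y != w)].

Lemma other_spec u w : Q u -> adj u w ->
  [/\ adj u (other u w), other u w != w &
     forall y, adj u y -> y = w \/ y = other u w].
Proof.
move=> /HQ [a [b [ab ua ub H _]]] uw.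
rewrite /other; case: pickP => [y /andP [uy yw]|H0] /=.
  split=> // y' uy'.
  case: (H _ uw) => ew; case: (H _ uy) => ey; case: (H _ uy') => ey'; subst;
   try by [left|right].
  - by rewrite eqxx in yw.
  - by rewrite eqxx in yw.
exfalso.
case: (H _ uw) => ew; subst w.
  by move: (H0 b); rewrite ub eq_sym ab.
by move: (H0 a); rewrite ua ab.
Qed.

Variable v0 : V.
Hypothesis Qv0 : Q v0.

Definition v1 : V := odflt v0 [pick y | adj v0 y].

Lemma adj_v1 : adj v0 v1.
Proof.
rewrite /v1; case: pickP => [y //|H0] /=.
have [a [b [_ ua _ _ _]]] := HQ Qv0.
by move: (H0 a); rewrite ua.
Qed.

Fixpoint wk (n : nat) : V * V :=
  match n with 0 => (v0, v1) | n'.+1 => let p := wk n' in (p.2, other p.2 p.1) end.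

Definition f n := (wk n).1.

Lemma fS n : f n.+1 = (wk n).2. Proof. by []. Qed.
Lemma fSS n : f n.+2 = other (f n.+1) (f n). Proof. by []. Qed.

Lemma fQ n : Q (f n) /\ adj (f n) (f n.+1).
Proof.
elim: n => [|n [Qn an]]; first by split => //; exact: adj_v1.
have Qn1 : Q (f n.+1) by apply: Qnb an.
split => //.
rewrite fSS.
have := other_spec Qn1 (_ : adj (f n.+1) (f n)).
by rewrite adj_sym => /(_ an) [].
Qed.

Lemma fadj n : adj (f n) (f n.+1). Proof. by case: (fQ n). Qed.

Lemma fW2 n : f n.+2 != f n.
Proof.
have Qn1 : Q (f n.+1) by apply: Qnb (proj1 (fQ n)) (fadj n).
have an : adj (f n.+1) (f n) by rewrite adj_sym fadj.
by rewrite fSS; case: (other_spec Qn1 an).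
Qed.

Lemma fW3 n y : adj (f n.+1) y -> y = f n \/ y = f n.+2.
Proof.
have Qn1 : Q (f n.+1) by apply: Qnb (proj1 (fQ n)) (fadj n).
have an : adj (f n.+1) (f n) by rewrite adj_sym fadj.
by rewrite fSS; case: (other_spec Qn1 an) => _ _ H /H.
Qed.

Lemma fconn n : connect adj v0 (f n).
Proof.
elim: n => [|n IH]; first exact: connect0.
apply: connect_trans IH _; apply: connect1; exact: fadj.
Qed.

Lemma fpar n : par (f n) = par v0 (+) odd n.
Proof.
elim: n => [|n IH] /=; first by rewrite addbF.
have := par_adj (fadj n); rewrite IH.
by case: (par (f n.+1)); case: (par v0); case: (odd n).
Qed.

Lemma exrep : exists j, [exists i : 'I_j, f i == f j].
Proof.
have [/existsP [j Hj]|H0] := boolP [exists j : 'I_(#|V|.+1), [exists i : 'I_j, f i == f j]].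
  by exists j.
exfalso.
pose g (i : 'I_(#|V|.+1)) := f i.
have gi : injective g.
  move=> i j; rewrite /g => eij; apply/val_inj => /=.
  case: (ltngtP i j) => // h.
  - by case/negP: H0; apply/existsP; exists j; apply/existsP; exists (Ordinal h); rewrite eij.
  - by case/negP: H0; apply/existsP; exists i; apply/existsP; exists (Ordinal h); rewrite eij.
have := leq_card g gi; rewrite card_ord; lia.
Qed.

Definition k := ex_minn exrep.

Lemma k_spec : (exists2 i, i < k & f i = f k) /\
   (forall j, j < k -> forall i, i < j -> f i <> f j).
Proof.
rewrite /k; case: ex_minnP => m /existsP [i2 /eqP Hi] Hmin; split.
  by exists i2.
move=> j jm i ij fij; have := Hmin j.
have -> : [exists i0 : 'I_j, f i0 == f j].
  by apply/existsP; exists (Ordinal ij); rewrite /= fij.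
move=> /(_ isT); lia.
Qed.

Lemma finj i j : i < k -> j < k -> f i = f j -> i = j.
Proof.
move=> ik jk fij; case: (ltngtP i j) => // h.
- by case: (proj2 k_spec j jk i h).
- by case: (proj2 k_spec i ik j h).
Qed.

Lemma k0 : f 0 = f k.
Proof.
case: k_spec => [[i1 ik fik] Hm].
case: i1 ik fik => [//|i] ik fik.
exfalso.
have kpos : 0 < k by lia.
have fk1 : adj (f k.-1) (f k) by have := fadj k.-1; rewrite prednK.
have ka : adj (f i.+1) (f k.-1) by rewrite fik adj_sym.
case: (fW3 ka) => e1.
- by apply: (Hm k.-1 _ i) => //; lia.
- case: (ltngtP i.+2 k.-1) => h.
  + by apply: (Hm k.-1 _ i.+2) => //; lia.
  + have hk : k.-1 = i.+1 by lia.
    by move: fk1; rewrite hk fik adj_irr.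
  + have hk : k = i.+3 by lia.
    by have := fW2 i.+1; rewrite -hk fik eqxx.
Qed.

Lemma k3 : 3 <= k.
Proof.
case: k_spec => [[i ik _] _].
case Hk: k ik => [//|[|[|k']]] // _.
- by have := fadj 0; rewrite k0 Hk adj_irr.
- by have := fW2 0; rewrite k0 Hk eqxx.
Qed.

Lemma fk1 : f k.+1 = f 1.
Proof.
have h3 := k3.
have ka : adj (f k.-1.+1) (f 1) by rewrite prednK ?(leq_trans _ h3) // -k0 fadj.
case: (fW3 ka) => e1.
- have := finj (_ : 1 < k) (_ : k.-1 < k) e1; lia.
- by move: e1; rewrite prednK ?(leq_trans _ h3) // => ->.
Qed.

Lemma nbr_cases i w : i < k -> adj (f i) w ->
  exists2 j, j < k & w = f j /\ (j = (i + 1) %% k \/ i = (j + 1) %% k).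
Proof.
have h3 := k3.
case: i => [|i] ik aw.
  have ka : adj (f k.-1.+1) w by rewrite prednK ?(leq_trans _ h3) // -k0.
  case: (fW3 ka) => ->.
  - exists k.-1; first lia.
    split=> //; right; rewrite addn1 prednK ?(leq_trans _ h3) // modnn //.
  - exists 1; first lia.
    rewrite prednK ?(leq_trans _ h3) // fk1; split=> //; left.
    by rewrite add0n modn_small //; lia.
case: (fW3 aw) => ->.
- exists i; first lia.
  split=> //; right; rewrite modn_small //; lia.
- case: (ltngtP i.+2 k) => h.
  + exists i.+2 => //; split=> //; left; rewrite modn_small; lia.
  + lia.
  + exists 0; first lia.
    by rewrite h k0; split=> //; left; rewrite addn1 h modnn.
Qed.

Lemma adj_cases i j : i < k -> j < k ->
  (j = (i + 1) %% k \/ i = (j + 1) %% k) -> adj (f i) (f j).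
Proof.
have h3 := k3.
have H : forall i j, i < k -> j < k -> j = (i + 1) %% k -> adj (f i) (f j).
  move=> a b ak bk ->.
  case: (ltngtP a.+1 k) => h.
  - by rewrite addn1 modn_small // fadj.
  - lia.
  - by rewrite addn1 h modnn k0 -h fadj.
move=> ik jk [] h.
- exact: H.
- by rewrite adj_sym; apply: H.
Qed.

Lemma comp_eq : component adj v0 = [set f (nat_of_ord i) | i in 'I_k].
Proof.
apply/setP => w; rewrite inE.
apply/idP/idP.
- move=> cw.
  have cl : closed adj (mem [set f (nat_of_ord i) | i in 'I_k]).
    have H1 : forall u w, adj u w -> u \in [set f (nat_of_ord i) | i in 'I_k] -> w \in [set f (nat_of_ord i) | i in 'I_k].
      move=> u w' uw /imsetP [i _ eu]; subst u.
      have [j jk [-> _]] := nbr_cases (ltn_ord i) uw.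
      by apply/imsetP; exists (Ordinal jk).
    move=> u w' uw; apply/idP/idP; first exact: H1.
    by apply: H1; rewrite adj_sym.
  rewrite -(closed_connect cl cw).
  have h3 := k3.
  by apply/imsetP; exists (Ordinal (leq_trans (isT : 0 < 3) h3)).
- by case/imsetP => i _ ->; apply: fconn.
Qed.

Lemma even_cycle : is_even_cycle adj (component adj v0).
Proof.
exists k; split.
  have := fpar k; rewrite -k0 /=.
  by case: (par v0); case: (odd k).
split; first exact: k3.
exists (fun i : 'I_k => f i); split.
  by move=> i j /(finj (ltn_ord i) (ltn_ord j)) /val_inj.
split; first exact: comp_eq.
move=> i j; split.
- move=> /(nbr_cases (ltn_ord i)) [j' j'k [/(finj (ltn_ord j) j'k) ->]] //.
- exact: adj_cases.
Qed.

End Cycle.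



Section Main.
Variables (T : finType) (e : rel T).
Hypothesis esym : symmetric e.
Hypothesis eirr : irreflexive e.

Local Notation V := (IAR_vert e).
Implicit Types (S A B : {set T}) (x y z c d : T).

Definition good (S : {set T}) : bool := indep e S && (S != set0).

Lemma indepP (S : {set T}) :
  reflect (forall x y, x \in S -> y \in S -> ~~ e x y) (indep e S).
Proof.
apply: (iffP forallP) => [H x y xS yS | H x].
  by have /implyP/(_ xS)/forallP/(_ y)/implyP/(_ yS) := H x.
apply/implyP => xS; apply/forallP => y; apply/implyP => yS; exact: H.
Qed.

Lemma goodP S : reflect ((forall x y, x \in S -> y \in S -> ~~ e x y) /\ exists x, x \in S)
  (good S).
Proof.
apply: (iffP andP) => [[/indepP H /set0Pn [x xS]]|[H [x xS]]].
  by split => //; exists x.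
by split; [apply/indepP|apply/set0Pn; exists x].
Qed.

Lemma good1 x : good [set x].
Proof.
apply/goodP; split; last by exists x; rewrite inE.
by move=> a b; rewrite !inE => /eqP -> /eqP ->; rewrite eirr.
Qed.

Lemma good_sub S S' : good S -> S' \subset S -> S' != set0 -> good S'.
Proof.
move=> /goodP [H _] sub /set0Pn [x xS]; apply/goodP; split; last by exists x.
by move=> a b aS bS; apply: H; apply: (subsetP sub).
Qed.

Lemma goodU1 S c : good S -> (forall y, y \in S -> ~~ e c y) -> good (c |: S).
Proof.
move=> /goodP [H [x xS]] Hc; apply/goodP; split; last by exists c; rewrite setU11.
move=> a b; rewrite !inE => /orP [/eqP ->|aS] /orP [/eqP ->|bS].
- by rewrite eirr.
- exact: Hc.
- by rewrite esym; apply: Hc.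
- exact: H.
Qed.

Lemma goodU1_inv S c y : good (c |: S) -> y \in S -> ~~ e c y.
Proof.
move=> /goodP [H _] yS; apply: H; rewrite !inE ?yS ?orbT ?eqxx //.
Qed.

Lemma goodU1_good S c : good (c |: S) -> S != set0 -> good S.
Proof. by move=> g; apply: good_sub g _; apply: subsetUr. Qed.

Definition adjS (S S' : {set T}) := #|(S :\: S') :|: (S' :\: S)| == 1.

Lemma adjSC S S' : adjS S S' = adjS S' S.
Proof. by rewrite /adjS setUC. Qed.

Lemma adjS_U1 S c : c \notin S -> adjS S (c |: S).
Proof.
move=> cS; rewrite /adjS.
have -> : (S :\: (c |: S)) :|: ((c |: S) :\: S) = [set c].
  apply/setP => y; rewrite !inE.
  case: (y =P c) => [->|_]; rewrite ?(negbTE cS) //=.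
  by case: (y \in S).
by rewrite cards1.
Qed.

Lemma adjS_D1 S b : b \in S -> adjS S (S :\ b).
Proof.
move=> bS; rewrite adjSC -{2}(setD1K bS); apply: adjS_U1.
by rewrite !inE eqxx.
Qed.

Lemma adjS_char S S' : adjS S S' ->
  (exists2 c, c \notin S & S' = c |: S) \/ (exists2 b, b \in S & S' = S :\ b).
Proof.
move=> /cards1P [c Hc].
have HD : forall y, ((y \in S) (+) (y \in S')) = (y == c).
  move=> y; have := congr1 (fun A => y \in A) Hc; rewrite /= !inE => <-.
  by case: (y \in S); case: (y \in S').
have := HD c; rewrite eqxx.
case cS: (c \in S); case cS': (c \in S') => // _.
- right; exists c => //; apply/setP => y; rewrite !inE.
  have := HD y; case: (y =P c) => [->|_]; rewrite ?cS ?cS' //.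
  by case: (y \in S); case: (y \in S').
- left; first (exists c; first by rewrite cS).
  apply/setP => y; rewrite !inE.
  have := HD y; case: (y =P c) => [->|_]; rewrite ?cS ?cS' //.
  by case: (y \in S); case: (y \in S').
Qed.

Lemma adjS_card S S' : adjS S S' -> #|S'| = #|S|.+1 \/ #|S| = #|S'|.+1.
Proof.
case/adjS_char => [[c cS ->]|[b bS ->]].
  by left; rewrite cardsU1 cS.
by right; rewrite (cardsD1 b S) bS.
Qed.

Definition vx S (gS : good S) : V := Sub S gS.
Lemma vxK S (gS : good S) : val (vx gS) = S.
Proof. by rewrite /vx SubK. Qed.

Lemma adjV (u v : V) : IAR_adj u v = adjS (val u) (val v).
Proof. by []. Qed.

Lemma goodV0 (u : V) : good (val u).
Proof. exact: valP u. Qed.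

Lemma count_gen (u : V) (P : {set T} -> bool) :
  #|[set w | IAR_adj u w & P (val w)]| =
  #|[set b in val u | good (val u :\ b) && P (val u :\ b)]| +
  #|[set c | [&& c \notin val u, good (c |: val u) & P (c |: val u)]]|.
Proof.
set X := [set w | IAR_adj u w & P (val w)].
set S := val u.
set Bs := [set b in S | good (S :\ b) && P (S :\ b)].
set Cs := [set c | [&& c \notin S, good (c |: S) & P (c |: S)]].
rewrite -(card_imset X val_inj).
have -> : val @: X = (fun b => S :\ b) @: Bs :|: (fun c => c |: S) @: Cs.
  apply/setP => W; apply/imsetP/setUP.
  - move=> [w]; rewrite inE => /andP [aw Lw] ->.
    have gw : good (val w) := goodV0 w.
    move: aw; rewrite adjV => /adjS_char [[c cS ew]|[b bS ew]].
    + right; apply/imsetP; exists c => //.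
      by move: gw Lw; rewrite /Cs ew inE cS => -> /= ->.
    + left; apply/imsetP; exists b => //.
      by move: gw Lw; rewrite /Bs ew inE bS => -> /= ->.
  - move=> [/imsetP [b]|/imsetP [c]].
    + rewrite inE => /andP [bS /andP [gb Lb]] ->.
      exists (vx gb); last by rewrite vxK.
      by rewrite inE adjV !vxK adjS_D1.
    + rewrite inE => /and3P [cS gc Lc] ->.
      exists (vx gc); last by rewrite vxK.
      by rewrite inE adjV !vxK adjS_U1.
rewrite cardsU.
have -> : (fun b => S :\ b) @: Bs :&: (fun c => c |: S) @: Cs = set0.
  apply/setP => W; rewrite !inE; apply/negP => /andP [/imsetP [b] + ->].
  rewrite inE => /andP [bS _] /imsetP [c]; rewrite inE => /andP [cS _] h.
  have := congr1 (fun A => #|A|) h; rewrite /= cardsU1 cS (cardsD1 b S) bS; lia.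
rewrite cards0 subn0 !card_in_imset //.
- move=> c1 c2; rewrite /Cs !inE => /andP [c1S _] /andP [c2S _] h.
  have : c1 \in c2 |: S by rewrite -h setU11.
  by rewrite !inE (negbTE c1S) orbF => /eqP.
- move=> b1 b2; rewrite /Bs !inE => /andP [b1S _] /andP [b2S _] h.
  apply/eqP; apply: contraT => nb.
  have : b1 \in S :\ b2 by rewrite !inE nb b1S.
  by rewrite -h !inE eqxx.
Qed.

Lemma adj_down (u w : V) : IAR_adj u w -> #|val w| < #|val u| ->
  exists2 b, b \in val u & val w = val u :\ b.
Proof.
rewrite adjV => /adjS_char [[c cS ->]|[b bS ->]]; last by exists b.
by rewrite cardsU1 cS; lia.
Qed.

Lemma adj_up (u w : V) : IAR_adj u w -> #|val u| < #|val w| ->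
  exists2 c, c \notin val u & val w = c |: val u.
Proof.
rewrite adjV => /adjS_char [[c cS ->]|[b bS ->]]; first by exists c.
by rewrite (cardsD1 b (val u)) bS; lia.
Qed.

Lemma sub_card (A : {set T}) i : i <= #|A| -> exists2 B : {set T}, B \subset A & #|B| = i.
Proof.
move Hn : #|A| => n; elim: n A Hn i => [|n IH] A Hn i hi.
  by exists A => //; rewrite Hn; lia.
case: (i =P n.+1) => [->|ni]; first by exists A.
have : 0 < #|A| by rewrite Hn.
move=> /card_gt0P [a aA].
have cA : #|A :\ a| = n by move: Hn; rewrite (cardsD1 a A) aA add1n => -[].
have hin : i <= n by lia.
have [B sB cB] := IH _ cA i hin.
exists B => //; apply: subset_trans sB _; exact: subsetDl.
Qed.

Lemma alpha_spec : exists2 A0, indep e A0 & alpha e = #|A0|.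
Proof.
have i0 : indep e set0 by apply/indepP => x y; rewrite inE.
case: (arg_maxnP (fun A : {set T} => #|A|) i0) => A0 iA0 Hmax.
exists A0 => //; apply/eqP; rewrite eqn_leq leq_bigmax_cond // andbT.
by apply/bigmax_leqP => A iA; apply: Hmax.
Qed.

Lemma alpha_ge A : indep e A -> #|A| <= alpha e.
Proof. by move=> iA; rewrite /alpha; apply: leq_bigmax_cond. Qed.

Lemma unionD (U : {set T}) b1 b2 : b1 \in U -> b2 \in U -> b1 != b2 ->
  U = (U :\ b1) :|: (U :\ b2).
Proof.
move=> b1U b2U b12; apply/setP => y; rewrite !inE.
case: (y =P b1) => [->|yb1] /=; first by rewrite b1U b12.
by case: (y \in U); rewrite ?andbF.
Qed.

Lemma natural : is_layering (@IAR_adj T e) (alpha e) (fun A : V => #|val A|).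
Proof.
split.
  move=> v; have /andP [iv nv] := goodV0 v.
  by rewrite card_gt0 nv /= alpha_ge.
split.
  move=> i /andP [i1 ia]; have [A0 iA0 aA0] := alpha_spec.
  have hi : i <= #|A0| by rewrite -aA0.
  have [B sB cB] := sub_card hi.
  have gB : good B.
    apply/andP; split; first by apply/indepP => x y xB yB;
      move/indepP: iA0; apply; apply: (subsetP sB).
    by rewrite -card_gt0 cB.
  by exists (vx gB); rewrite vxK.
split.
  by move=> u v /adjS_card [] ->; rewrite ?eqn_leq ?ltnn ?andbF.
split.
  by move=> u v /adjS_card [] ->; [left|right].
split.
  move=> v h2.
  rewrite (count_gen v (fun W => #|W| == #|val v|.-1)).
  have -> : [set b in val v | good (val v :\ b) && (#|val v :\ b| == #|val v|.-1)]
      = val v.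
    apply/setP => b; rewrite inE; case: (boolP (b \in val v)) => //= bv.
    have cb : #|val v :\ b| = #|val v|.-1.
      by move: (cardsD1 b (val v)); rewrite bv; lia.
    rewrite cb eqxx andbT; apply: good_sub (goodV0 v) (subsetDl _ _) _.
    by rewrite -card_gt0 cb -subn1 subn_gt0.
  have -> : [set c | [&& c \notin val v, good (c |: val v) & #|c |: val v| == #|val v|.-1]]
      = set0.
    apply/setP => c; rewrite !inE; apply/negP => /and3P [cv _].
    by rewrite cardsU1 cv; lia.
  by rewrite cards0 addn0.
move=> u v uv cuv; split.
- apply/card_le1_eqP => w1 w2; rewrite !inE => /and3P [a1 b1 c1] /and3P [a2 b2 c2].
  have lt1 : #|val w1| < #|val u|.
    by move/eqP: c1 => ->; rewrite ltn_predL card_gt0; case/andP: (goodV0 u).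
  have lt2 : #|val w2| < #|val u|.
    by move/eqP: c2 => ->; rewrite ltn_predL card_gt0; case/andP: (goodV0 u).
  have [d1 d1u e1] := adj_down a1 lt1; have [d2 d2u e2] := adj_down a2 lt2.
  have lt1' : #|val w1| < #|val v| by rewrite -cuv.
  have lt2' : #|val w2| < #|val v| by rewrite -cuv.
  have [d1' d1v e1'] := adj_down b1 lt1'.
  have [d2' d2v e2'] := adj_down b2 lt2'.
  apply: val_inj; case: (d1 =P d2) => [ed|nd]; first by rewrite e1 e2 ed.
  case: (d1' =P d2') => [ed|nd']; first by rewrite e1' e2' ed.
  exfalso; move/eqP: uv; apply; apply: val_inj.
  rewrite (unionD d1u d2u (introN eqP nd)) (unionD d1v d2v (introN eqP nd')).
  by rewrite -e1 -e2 -e1' -e2'.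
- apply/card_le1_eqP => w1 w2; rewrite !inE => /and3P [a1 b1 c1] /and3P [a2 b2 c2].
  have lt1 : #|val u| < #|val w1| by move/eqP: c1 => ->.
  have lt2 : #|val u| < #|val w2| by move/eqP: c2 => ->.
  have [d1 d1u e1] := adj_up a1 lt1; have [d2 d2u e2] := adj_up a2 lt2.
  have lt1' : #|val v| < #|val w1| by rewrite -cuv.
  have lt2' : #|val v| < #|val w2| by rewrite -cuv.
  have [d1' d1v e1'] := adj_up b1 lt1'.
  have [d2' d2v e2'] := adj_up b2 lt2'.
  have [y yv yu] : exists2 y, y \in val v & y \notin val u.
    apply/exists_inP; apply: contraT; rewrite negb_exists_in => /forall_inP H.
    have sub : val v \subset val u by apply/subsetP => y yv; have := H y yv; rewrite negbK.
    have : val v == val u by rewrite eqEcard sub cuv leqnn.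
    by move/eqP/val_inj => evu; rewrite evu eqxx in uv.
  have y1 : y = d1.
    have : y \in val w1 by rewrite e1' inE yv orbT.
    by rewrite e1 !inE (negbTE yu) orbF => /eqP.
  have y2 : y = d2.
    have : y \in val w2 by rewrite e2' inE yv orbT.
    by rewrite e2 !inE (negbTE yu) orbF => /eqP.
  by apply: val_inj; rewrite e1 e2 -y1 -y2.
Qed.

Variable L : V -> nat.
Definition Lset (S : {set T}) : nat := if insub S is Some u then L u else 0.

Lemma LsetE (u : V) : Lset (val u) = L u.
Proof. by rewrite /Lset valK. Qed.

Lemma Lvx S (gS : good S) : L (vx gS) = Lset S.
Proof. by rewrite -LsetE vxK. Qed.


Variable p : nat.
Hypothesis HL : is_layering (@IAR_adj T e) p L.


Lemma Lpos S : good S -> 0 < Lset S.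
Proof.
move=> gS; rewrite -(Lvx gS); case: HL => H1 _.
by case/andP: (H1 (vx gS)).
Qed.

Lemma Lle S : good S -> Lset S <= p.
Proof.
move=> gS; rewrite -(Lvx gS); case: HL => H1 _.
by case/andP: (H1 (vx gS)).
Qed.

Lemma Lstep S c : good S -> c \notin S -> good (c |: S) ->
  Lset (c |: S) = (Lset S).+1 \/ Lset S = (Lset (c |: S)).+1.
Proof.
move=> gS cS gcS; rewrite -(Lvx gS) -(Lvx gcS).
case: HL => _ [_ [_ [H2 _]]]; apply: H2.
by rewrite adjV !vxK; apply: adjS_U1.
Qed.

Lemma square A c y : good A -> c \notin A -> y \notin A -> c != y ->
  good (c |: (y |: A)) ->
  (Lset (c |: A) == (Lset A).+1) = (Lset (c |: (y |: A)) == (Lset (y |: A)).+1).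
Proof.
move=> gA cA yA cy gCY.
have gC : good (c |: A).
  apply: good_sub gCY _ _; last by apply/set0Pn; exists c; rewrite setU11.
  by apply/subsetP => w; rewrite !inE => /orP [->|->]; rewrite ?orbT.
have gY : good (y |: A).
  apply: good_sub gCY _ _; last by apply/set0Pn; exists y; rewrite setU11.
  by apply/subsetP => w; rewrite !inE => /orP [->|->]; rewrite ?orbT.
case: HL => _ [_ [_ [H2 [_ H4]]]].
have cyA : c \notin y |: A by rewrite !inE negb_or cy cA.
have ycA : y \notin c |: A by rewrite !inE negb_or eq_sym cy yA.
pose uA := vx gA; pose uC := vx gC; pose uY := vx gY; pose uCY := vx gCY.
have aAC : IAR_adj uA uC by rewrite adjV !vxK adjS_U1.
have aAY : IAR_adj uA uY by rewrite adjV !vxK adjS_U1.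
have aYCY : IAR_adj uY uCY by rewrite adjV !vxK adjS_U1.
have aCCY : IAR_adj uC uCY by rewrite adjV !vxK setUCA adjS_U1.
have sym' : forall u v : V, IAR_adj u v -> IAR_adj v u.
  by move=> u v; rewrite !adjV adjSC.
have nCY : uC != uY.
  apply/eqP => /(congr1 val); rewrite !vxK => h.
  have : c \in y |: A by rewrite -h setU11.
  by rewrite (negbTE cyA).
have nAD : uA != uCY.
  apply/eqP => /(congr1 val); rewrite !vxK => h.
  have : c \in A by rewrite h setU11.
  by rewrite (negbTE cA).
have h1 := H2 _ _ aAC; have h2 := H2 _ _ aAY; have h3 := H2 _ _ aYCY;
have h4 := H2 _ _ aCCY.
have key : ~ (L uC = L uY /\ L uA = L uCY).
  move=> [eCY eAD].
  have [Hm Hp] := H4 uC uY nCY eCY.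
  case: h1 => hb.
  - have : [set uA; uCY] \subset [set w | [&& IAR_adj uC w, IAR_adj uY w & L w == (L uC).-1]].
      apply/subsetP => w; rewrite !inE => /orP [] /eqP ->.
        by rewrite (sym' _ _ aAC) (sym' _ _ aAY) /= hb.
      by rewrite aCCY aYCY /= -eAD hb.
    move=> /subset_leq_card; rewrite cards2 nAD => h; move: (leq_trans h Hm).
    by [].
  - have : [set uA; uCY] \subset [set w | [&& IAR_adj uC w, IAR_adj uY w & L w == (L uC).+1]].
      apply/subsetP => w; rewrite !inE => /orP [] /eqP ->.
        by rewrite (sym' _ _ aAC) (sym' _ _ aAY) /= hb.
      by rewrite aCCY aYCY /= -eAD hb.
    move=> /subset_leq_card; rewrite cards2 nAD => h; move: (leq_trans h Hp).
    by [].
rewrite -(Lvx gA) -(Lvx gC) -(Lvx gY) -(Lvx gCY) -/uA -/uC -/uY -/uCY.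
move: key h1 h2 h3 h4.
generalize (L uA) (L uC) (L uY) (L uCY) => a b c' d.
clear.
move=> key h1 h2 h3 h4.
apply/idP/idP => /eqP h; apply/eqP; lia.
Qed.





Lemma count_nb S : good S -> 2 <= Lset S ->
  #|[set b in S | good (S :\ b) && (Lset (S :\ b) == (Lset S).-1)]| +
  #|[set c | [&& c \notin S, good (c |: S) & Lset (c |: S) == (Lset S).-1]]|
  = Lset S.
Proof.
move=> gS L2.
case: HL => _ [_ [_ [_ [H3 _]]]].
set Bs := [set b in S | _].
set Cs := [set c | _].
set u := vx gS.
have Lu : L u = Lset S by rewrite Lvx.
set X := [set w | IAR_adj u w & L w == (Lset S).-1].
have HX : #|X| = Lset S by rewrite /X -Lu; apply: H3; rewrite Lu.
rewrite -[RHS]HX -(card_imset X val_inj).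
have -> : val @: X = (fun b => S :\ b) @: Bs :|: (fun c => c |: S) @: Cs.
  apply/setP => W; apply/imsetP/setUP.
  - move=> [w]; rewrite inE => /andP [aw Lw] ->.
    have gw : good (val w) := valP w.
    move: aw; rewrite adjV vxK => /adjS_char [[c cS ew]|[b bS ew]].
    + right; apply/imsetP; exists c => //.
      by move: gw Lw; rewrite -LsetE ew inE cS => -> /= ->.
    + left; apply/imsetP; exists b => //.
      by move: gw Lw; rewrite -LsetE ew inE bS => -> /= ->.
  - move=> [/imsetP [b]|/imsetP [c]].
    + rewrite inE => /andP [bS /andP [gb Lb]] ->.
      exists (vx gb); last by rewrite vxK.
      by rewrite inE adjV !vxK adjS_D1 //= Lvx.
    + rewrite inE => /and3P [cS gc Lc] ->.
      exists (vx gc); last by rewrite vxK.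
      by rewrite inE adjV !vxK adjS_U1 //= Lvx.
rewrite cardsU.
have -> : (fun b => S :\ b) @: Bs :&: (fun c => c |: S) @: Cs = set0.
  apply/setP => W; rewrite !inE; apply/negP => /andP [/imsetP [b] + ->].
  rewrite inE => /andP [bS _] /imsetP [c]; rewrite inE => /andP [cS _] h.
  have := congr1 (fun A => #|A|) h; rewrite /= cardsU1 cS (cardsD1 b S) bS; lia.
rewrite cards0 subn0 !card_in_imset //.

- move=> c1 c2; rewrite /Cs !inE => /andP [c1S _] /andP [c2S _] h.
  have : c1 \in c2 |: S by rewrite -h setU11.
  by rewrite !inE (negbTE c1S) orbF => /eqP.
- move=> b1 b2; rewrite /Bs !inE => /andP [b1S _] /andP [b2S _] h.
  apply/eqP; apply: contraT => nb.
  have : b1 \in S :\ b2 by rewrite !inE nb b1S.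
  by rewrite -h !inE eqxx.
Qed.


Lemma downE S c : good S -> c \notin S -> good (c |: S) ->
  (Lset (c |: S) == (Lset S).-1) = ~~ (Lset (c |: S) == (Lset S).+1).
Proof.
move=> gS cS gcS; have := Lstep gS cS gcS; have := Lpos gS.
move: (Lset (c |: S)) (Lset S) => m n h1 h2.
case: eqP => [h3|h3]; case: eqP => [h4|h4] //=; exfalso; lia.
Qed.

Lemma upE S c : good S -> c \notin S -> good (c |: S) ->
  (Lset S == (Lset (c |: S)).-1) = (Lset (c |: S) == (Lset S).+1).
Proof.
move=> gS cS gcS; have := Lstep gS cS gcS; have := Lpos gcS.
move: (Lset (c |: S)) (Lset S) => m n h1 h2.
case: eqP => [h3|h3]; case: eqP => [h4|h4] //=; exfalso; lia.
Qed.

Lemma upD S c : good S -> c \notin S -> good (c |: S) ->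
  ~~ (Lset (c |: S) == (Lset S).+1) -> Lset S = (Lset (c |: S)).+1.
Proof.
move=> gS cS gcS; case: (Lstep gS cS gcS) => -> //; by rewrite eqxx.
Qed.

Lemma good2 x c : ~~ e c x -> good (c |: [set x]).
Proof.
move=> h; apply: goodU1; first exact: good1.
by move=> y; rewrite inE => /eqP ->.
Qed.

Lemma good2_inv x c : good (c |: [set x]) -> ~~ e x c.
Proof. by move=> g; rewrite esym; apply: (goodU1_inv g); rewrite inE. Qed.

Definition sg x c := Lset (c |: [set x]) == (Lset [set x]).+1.
Definition Nx x := [set c | (c != x) && ~~ e x c].
Definition Yx x := [set c in Nx x | ~~ sg x c].

Lemma chain n B x c : #|B| = n -> good B -> x \in B -> c \notin B ->
  good (c |: B) -> (Lset (c |: B) == (Lset B).+1) = sg x c.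
Proof.
elim: n B => [|n IH] B cardB gB xB cB gcB.
  by move: cardB; move/card0_eq => /(_ x); rewrite xB.
case: (boolP [exists w in B, w != x]) => [/existsP [w /andP [wB wx]]|H].
  set A := B :\ w.
  have eB : B = w |: A by rewrite setD1K.
  have xA : x \in A by rewrite !inE eq_sym wx.
  have gA : good A.
    apply: good_sub gB _ _; first by apply: subsetDl.
    by apply/set0Pn; exists x.
  have cA : c \notin A by rewrite !inE negb_and cB orbT.
  have wA : w \notin A by rewrite !inE eqxx.
  have cw : c != w by apply: contraNneq cB => ->.
  have gcA : good (c |: A).
    apply: good_sub gcB _ _; last by apply/set0Pn; exists c; rewrite setU11.
    by apply: setUS; apply: subsetDl.
  have cardA : #|A| = n by move: cardB; rewrite (cardsD1 w B) wB add1n => -[].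
  rewrite -(IH A cardA gA xA cA gcA) eB.
  rewrite eB in gcB.
  by rewrite (square gA cA wA cw gcB).
have eB : B = [set x].
  apply/setP => y; rewrite inE; apply/idP/idP => [yB|/eqP -> //].
  apply: contraNT H => yx; apply/existsP; exists y; by rewrite yB.
by rewrite /sg eB.
Qed.

Lemma consist a b c : a != b -> c != a -> c != b -> ~~ e a b -> ~~ e a c ->
  ~~ e b c -> sg a c = sg b c.
Proof.
move=> ab ca cb eab eac ebc.
have gB : good (b |: [set a]) by apply: good2; rewrite esym.
have cB : c \notin b |: [set a] by rewrite !inE negb_or cb ca.
have gcB : good (c |: (b |: [set a])).
  apply: goodU1 => // y; rewrite !inE => /orP [] /eqP ->; by rewrite esym.
have aB : a \in b |: [set a] by rewrite !inE eqxx orbT.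
have bB : b \in b |: [set a] by rewrite setU11.
by rewrite -(chain (erefl _) gB aB cB gcB) (chain (erefl _) gB bB cB gcB).
Qed.

Lemma Ysize x : 2 <= Lset [set x] -> #|Yx x| = Lset [set x].
Proof.
move=> h2; rewrite -[RHS](count_nb (good1 x) h2).
have -> : [set b in [set x] | good ([set x] :\ b) && (Lset ([set x] :\ b) == (Lset [set x]).-1)] = set0.
  apply/setP => b; rewrite !inE; case: (b =P x) => [->|] //=.
  by rewrite setDv /good eqxx andbF.
rewrite cards0 add0n; apply: eq_card => c; rewrite !inE.
case: (c =P x) => [->|cx]; first by [].
have cx' : c != x by apply/eqP.
have cx'' : c \notin [set x] by rewrite inE.
case: (boolP (e x c)) => exc.
  have -> : good (c |: [set x]) = false by apply/negP => /good2_inv; rewrite exc.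
  by rewrite andbF.
have g : good (c |: [set x]) by apply: good2; rewrite esym.
by rewrite g downE ?good1.
Qed.


Lemma YxP x c : c \in Yx x -> [/\ c != x, ~~ e x c & ~~ sg x c].
Proof. by rewrite !inE => /andP [/andP [-> ->] ->]. Qed.

Lemma YxE x c : (c \in Yx x) = [&& c != x, ~~ e x c & ~~ sg x c].
Proof. by rewrite !inE andbA. Qed.

Lemma good3 x z c : ~~ e z x -> good (c |: (z |: [set x])) = ~~ e c z && ~~ e c x.
Proof.
move=> ezx; apply/idP/idP => [g|/andP [h1 h2]].
  have xin : x \in z |: [set x] by rewrite !inE eqxx orbT.
  by rewrite (goodU1_inv g (setU11 z [set x])) (goodU1_inv g xin).
apply: goodU1; first exact: good2.
by move=> y; rewrite !inE => /orP [] /eqP ->.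
Qed.

Lemma pairD1 (a b : T) : a != b ->
  (a |: [set b]) :\ a = [set b] /\ (a |: [set b]) :\ b = [set a].
Proof.
move=> ab; have ba : b != a by rewrite eq_sym.
split; apply/setP => y; rewrite !inE;
  case: (y =P a) => [->|ya]; case: (y =P b) => [yb|yb] //=;
  rewrite ?eqxx ?(negbTE ab) ?(negbTE ba) //=.
Qed.

Definition Aset x z := [set c in Yx x | e z c].
Definition nAset x z := [set c in Yx x | (c != z) && ~~ e z c].

Lemma pairCnt x z : 3 <= Lset [set x] -> z \in Yx x -> #|Aset x z| = sg z x.
Proof.
move=> h3 zY; have [zx exz nsg] := YxP zY.
have ezx : ~~ e z x by rewrite esym.
have gP : good (z |: [set x]) by apply: good2.
have zx' : z \notin [set x] by rewrite inE.
have LP := upD (good1 x) zx' gP nsg.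
have h2 : 2 <= Lset (z |: [set x]) by lia.
have := count_nb gP h2.
have -> : [set b in z |: [set x] | good ((z |: [set x]) :\ b) &&
   (Lset ((z |: [set x]) :\ b) == (Lset (z |: [set x])).-1)] =
   [set b | (b == x) && sg z x].
  apply/setP => b; rewrite !inE.
  case: (b =P z) => [->|bz] /=.
    rewrite (proj1 (pairD1 zx)).
    rewrite (negbTE zx) good1 /=; apply/negbTE; rewrite LP; apply/eqP; lia.
  case: (b =P x) => [->|bx] //=.
  rewrite (proj2 (pairD1 zx)).
  have xz' : x \notin [set z] by rewrite inE eq_sym.
  have gP' : good (x |: [set z]) by apply: good2.
  by rewrite good1 /= setUC upE ?good1.
have -> : [set c | [&& c \notin z |: [set x], good (c |: (z |: [set x])) &
    Lset (c |: (z |: [set x])) == (Lset (z |: [set x])).-1]] = nAset x z.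
  apply/setP => c; rewrite /nAset inE [in RHS]inE YxE !inE negb_or.
  case: (c =P z) => [->|cz] /=; first by rewrite andbF.
  case: (c =P x) => [->|cx] //=.
  rewrite good3 //.
  case: (boolP (e c z)) => ecz /=; first by rewrite [e z c]esym ecz !andbF.
  case: (boolP (e c x)) => ecx /=; first by rewrite esym ecx.
  have gcP : good (c |: (z |: [set x])) by rewrite good3 // ecz ecx.
  have cP : c \notin z |: [set x] by rewrite !inE negb_or; apply/andP; split; apply/eqP.
  have xP : x \in z |: [set x] by rewrite !inE eqxx orbT.
  rewrite downE // (chain (erefl _) gP xP cP gcP).
  by rewrite esym ecx esym ecz !andbT.
have Ys := Ysize (leq_trans (isT : 2 <= 3) h3).
have := cardsID [set c | e z c] (Yx x).
have -> : Yx x :&: [set c | e z c] = Aset x z.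
  by apply/setP => c; rewrite !inE.
have -> : Yx x :\: [set c | e z c] = z |: nAset x z.
  apply/setP => c; rewrite !inE.
  case: (c =P z) => [->|cz] /=; last by rewrite andbC.
  by rewrite eirr zx exz nsg.
rewrite cardsU1 Ys.
have -> : z \notin nAset x z by rewrite !inE eqxx /= andbF.
have -> : #|[set b | (b == x) && sg z x]| = sg z x.
  case: (sg z x).
  - by rewrite -[RHS](cards1 x); apply: eq_card => b; rewrite !inE andbT.
  - by apply/eqP; rewrite cards_eq0; apply/eqP/setP => b; rewrite !inE andbF.
move: LP; case: (sg z x) => /=; lia.
Qed.


Lemma factA x : 2 <= Lset [set x] ->
  (forall c d, c \in Yx x -> d \in Yx x -> ~~ e c d) -> False.
Proof.
move=> h2 Hind.
have claim : forall n S, S \subset Yx x -> #|S| = n ->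
    good (x |: S) /\ Lset (x |: S) + n = Lset [set x].
  elim=> [|n IH] S sub cS.
    move/cards0_eq: cS => ->; rewrite setU0 addn0; split=> //; exact: good1.
  have : 0 < #|S| by rewrite cS.
  move=> /card_gt0P [c cS0].
  have [cx exc nsg] := YxP (subsetP sub c cS0).
  set S' := S :\ c.
  have sub' : S' \subset Yx x by apply: subset_trans sub; apply: subsetDl.
  have cS' : #|S'| = n by move: cS; rewrite (cardsD1 c S) cS0 add1n => -[].
  have [g' L'] := IH S' sub' cS'.
  have eS : x |: S = c |: (x |: S') by rewrite setUCA setD1K.
  have cn : c \notin x |: S' by rewrite !inE negb_or cx eqxx.
  have gc : good (c |: (x |: S')).
    apply: goodU1 => // y; rewrite !inE => /orP [/eqP ->|/andP [_ yS]].
      by rewrite esym.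
    apply: Hind => //; exact: (subsetP sub).
  have xin : x \in x |: S' by rewrite setU11.
  have := chain (erefl _) g' xin cn gc; rewrite (negbTE nsg) => /negbT hd.
  have := upD g' cn gc hd; rewrite -eS => h; split; first by rewrite eS.
  lia.
have [g Lx] := claim _ (Yx x) (subxx _) (erefl _).
have := Lpos g; rewrite Ysize // in Lx; lia.
Qed.

Lemma noMix x z : 3 <= Lset [set x] -> z \in Yx x -> sg z x.
Proof.
move=> h3 zY; apply: contraT => nsz.
have h2 : 2 <= Lset [set x] by lia.
have A0 : forall d, d \in Yx x -> ~~ sg d x -> Aset x d = set0.
  by move=> d dY nd; apply/cards0_eq; rewrite pairCnt // (negbTE nd).
have alln : forall d, d \in Yx x -> ~~ sg d x.
  move=> d dY; case: (d =P z) => [-> //|dz].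
  have [zx exz _] := YxP zY; have [dx exd _] := YxP dY.
  have ezd : ~~ e z d.
    apply: contraT; rewrite negbK => ezd.
    have : d \in Aset x z by rewrite /Aset inE dY ezd.
    by rewrite (A0 z zY nsz) inE.
  rewrite -(consist (_ : z != d) _ _ ezd) //.
  - by rewrite eq_sym; apply/eqP.
  - by rewrite eq_sym.
  - by rewrite eq_sym.
  - by rewrite esym.
  - by rewrite esym.
exfalso; apply: (factA h2) => c d cY dY.
case: (c =P d) => [->|cd]; first by rewrite eirr.
apply: contraT; rewrite negbK => ecd.
have : d \in Aset x c by rewrite /Aset inE dY ecd.
by rewrite (A0 c cY (alln c cY)) inE.
Qed.


Lemma Aone x w : 3 <= Lset [set x] -> w \in Yx x ->
  exists w', [/\ Aset x w = [set w'], w' \in Yx x & e w w'].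
Proof.
move=> h3 wY; have := pairCnt h3 wY; rewrite noMix // => /eqP /cards1P [w' Hw].
exists w'; split=> //; have : w' \in Aset x w by rewrite Hw set11.
  by rewrite /Aset inE => /andP [].
by rewrite /Aset inE => /andP [].
Qed.

Lemma fourY x z d c : Lset [set x] = 4 -> z \in Yx x -> d \in Yx x -> c \in Yx x ->
  z != d -> z != c -> d != c -> ~~ e z d -> ~~ e z c -> ~~ e d c -> False.
Proof.
move=> L4 zY dY cY zd zc dc ezd ezc edc.
have h3 : 3 <= Lset [set x] by rewrite L4.
have [z' [Az z'Y ezz']] := Aone h3 zY.
have [d' [Ad d'Y edd']] := Aone h3 dY.
set W := z |: (d |: [set c]).
have cW : #|W| = 3.
  rewrite /W cardsU1 cardsU1 cards1 !inE.
  by rewrite (negbTE zd) (negbTE zc) (negbTE dc).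
have sW : W \subset Yx x.
  by apply/subsetP => y /setU1P [->|/setU1P [->|/set1P ->]].
have := cardsDS sW; rewrite Ysize ?L4 // cW => /eqP /cards1P [w0 Hw0].
have inW0 : forall y, y \in Yx x -> y \notin W -> y = w0.
  move=> y yY yW; apply/set1P; rewrite -Hw0 inE yY yW //.
have ez'0 : z' = w0.
  apply: inW0 => //; rewrite !inE; apply/negP => /orP [/eqP e1|/orP [] /eqP e1];
    move: ezz'; rewrite e1 ?eirr ?(negbTE ezd) ?(negbTE ezc) //.
have ed'0 : d' = w0.
  apply: inW0 => //; rewrite !inE; apply/negP => /orP [/eqP e1|/orP [] /eqP e1];
    move: edd'; rewrite e1 ?eirr ?(negbTE edc) // esym (negbTE ezd) //.
have w0Y : w0 \in Yx x by rewrite -ez'0.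
have [w1 [Aw _ _]] := Aone h3 w0Y.
have : z \in Aset x w0 by rewrite /Aset inE zY esym -ez'0.
have : d \in Aset x w0 by rewrite /Aset inE dY esym -ed'0.
rewrite Aw !inE => /eqP e1 /eqP e2.
by move: zd; rewrite e1 e2 eqxx.
Qed.

Lemma le2 x : Lset [set x] <= 2.
Proof.
rewrite leqNgt; apply/negP => h3.
set M := Lset [set x].
have Ys : #|Yx x| = M by rewrite Ysize // ltnW.
have : 0 < #|Yx x| by rewrite Ys; clear -h3; lia.
move=> /card_gt0P [z zY].
have [zx exz nsz] := YxP zY.
have sz := noMix h3 zY.
have [z' [Az z'Y ezz']] := Aone h3 zY.
have : 0 < #|Yx x :\: [set z; z']|.
  rewrite cardsD Ys.
  have : #|Yx x :&: [set z; z']| <= 2.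
    by apply: leq_trans (subset_leq_card (subsetIr _ _)) _; rewrite cards2; case: (_ != _).
  clear -h3; lia.
move=> /card_gt0P [d] /setDP [dY]; rewrite !inE negb_or => /andP [dz dz'].
have [dx exd nsd] := YxP dY.
have ezd : ~~ e z d.
  apply/negP => ezd.
  have : d \in Aset x z by rewrite /Aset inE dY ezd.
  by rewrite Az inE (negbTE dz').
have xz : x != z by rewrite eq_sym.
have xd : x != d by rewrite eq_sym.
have sgzd : sg z d = false.
  by rewrite -(consist xz dx dz exz exd ezd); apply/negbTE.
have sgdz : sg d z = false.
  rewrite -(consist xd zx (_ : z != d) exd exz _); first by apply/negbTE.
    by rewrite eq_sym.
  by rewrite esym.
have ezx : ~~ e z x by rewrite esym.
have gP : good (z |: [set x]) by apply: good2.
have zx' : z \notin [set x] by rewrite inE.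
have LP := upD (good1 x) zx' gP nsz.
have xz' : x \notin [set z] by rewrite inE.
have gP' : good (x |: [set z]) by apply: good2.
have Lz : (Lset [set z]).+2 = M.
  move: sz LP; rewrite /sg setUC => /eqP h1 h2; clear -h1 h2; lia.
have dz1 : d \notin [set z] by rewrite inE.
have gdz : good (d |: [set z]) by apply: good2; rewrite esym.
case: (ltngtP M 4) => hM.
-
  have h1 := upD (good1 z) dz1 gdz (negbT sgzd).
  have h2 := Lpos gdz; clear -h1 h2 Lz hM; lia.
-
  have dYz : d \in Yx z by rewrite YxE dz ezd sgzd.
  have h3z : 3 <= Lset [set z] by clear -Lz hM; lia.
  by have := noMix h3z dYz; rewrite sgdz.
-
  have gR : good (d |: (z |: [set x])).
    by rewrite good3 // [e d z]esym ezd [e d x]esym exd.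
  have dP : d \notin z |: [set x] by rewrite !inE negb_or dz dx.
  have xP : x \in z |: [set x] by rewrite !inE eqxx orbT.
  have LR : Lset (z |: [set x]) = (Lset (d |: (z |: [set x]))).+1.
    by apply: upD => //; rewrite (chain (erefl _) gP xP dP gR) nsd.
  have LR2 : Lset (d |: (z |: [set x])) = 2 by clear -LR LP hM; lia.
  have dx1 : d \notin [set x] by rewrite inE.
  have gdx : good (d |: [set x]) by apply: good2; rewrite esym.
  have LPd := upD (good1 x) dx1 gdx nsd.
  have hB : [set b in d |: (z |: [set x]) |
      good ((d |: (z |: [set x])) :\ b) &&
      (Lset ((d |: (z |: [set x])) :\ b) == (Lset (d |: (z |: [set x]))).-1)]
      \subset [set x].
    apply/subsetP => b; rewrite inE => /andP [bR /andP [gb Lb]].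
    move: bR Lb; rewrite LR2 !inE => /orP [/eqP ->|/orP [/eqP ->|/eqP -> //]].
    + by rewrite setU1K // => /eqP h; exfalso; clear -h LR LR2; lia.
    + have -> : (d |: (z |: [set x])) :\ z = d |: [set x].
        apply/setP => y; rewrite !inE; case: (y =P z) => [->|yz] /=.
          by rewrite eq_sym (negbTE dz) (negbTE zx).
        by [].
      by move=> /eqP h; exfalso; clear -h LPd hM; lia.
  have hC : [set c | [&& c \notin d |: (z |: [set x]), good (c |: (d |: (z |: [set x]))) &
      Lset (c |: (d |: (z |: [set x]))) == (Lset (d |: (z |: [set x]))).-1]] = set0.
    apply/setP => c; rewrite inE [in RHS]inE; apply/negP => /and3P [cR gc Lc].
    have xR : x \in d |: (z |: [set x]) by rewrite !inE eqxx !orbT.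
    have ecd : ~~ e c d by apply: (goodU1_inv gc); rewrite setU11.
    have ecz : ~~ e c z by apply: (goodU1_inv gc); rewrite !inE eqxx orbT.
    have ecx : ~~ e c x by apply: (goodU1_inv gc).
    move: Lc; rewrite downE // (chain (erefl _) gR xR cR gc) => Lc.
    move: cR; rewrite !inE !negb_or => /and3P [cd cz cx].
    have cY : c \in Yx x by rewrite YxE cx [e x c]esym ecx Lc.
    apply: (fourY hM zY dY cY) => //.
    - by rewrite eq_sym.
    - by rewrite eq_sym.
    - by rewrite eq_sym.
    - by rewrite esym.
    - by rewrite esym.
  have L2R : 2 <= Lset (d |: (z |: [set x])) by rewrite LR2.
  have := count_nb gR L2R; rewrite hC cards0 addn0 => h.
  by have := subset_leq_card hB; rewrite h LR2 cards1.
Qed.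


Lemma L2b x y : Lset [set x] = 2 -> y \in Yx x ->
  Lset (y |: [set x]) = 1 /\ Lset [set y] = 2.
Proof.
move=> L2 yY; have [yx exy nsy] := YxP yY.
have y1 : y \notin [set x] by rewrite inE.
have gy : good (y |: [set x]) by apply: good2; rewrite esym.
have h1 := upD (good1 x) y1 gy nsy.
have x1 : x \notin [set y] by rewrite inE eq_sym.
have gx : good (x |: [set y]) by apply: good2.
have h2 := Lstep (good1 y) x1 gx; have h3 := Lpos (good1 y).
rewrite setUC in h2.
split; clear -h1 h2 h3 L2; lia.
Qed.

Lemma L2c x y1 y2 : Lset [set x] = 2 -> y1 \in Yx x -> y2 \in Yx x -> y1 != y2 ->
  e y1 y2.
Proof.
move=> L2 y1Y y2Y y12; apply: contraT => ne.
have [y1x exy1 ns1] := YxP y1Y; have [y2x exy2 ns2] := YxP y2Y.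
have ey1x : ~~ e y1 x by rewrite esym.
have gP : good (y1 |: [set x]) by apply: good2.
have gR : good (y2 |: (y1 |: [set x])) by rewrite good3 // [e y2 y1]esym ne [e y2 x]esym exy2.
have xP : x \in y1 |: [set x] by rewrite !inE eqxx orbT.
have yP : y2 \notin y1 |: [set x] by rewrite !inE negb_or eq_sym y12 y2x.
have h := upD gP yP gR (_ : _); rewrite (chain (erefl _) gP xP yP gR) in h.
have := h ns2; rewrite (proj1 (L2b L2 y1Y)); have := Lpos gR; clear; lia.
Qed.

Lemma L2a x c : Lset [set x] = 2 -> c \in Nx x -> c \in Yx x.
Proof.
move=> L2 cN.
have /andP [cx exc] : (c != x) && ~~ e x c by move: cN; rewrite inE.
rewrite YxE cx exc /=; apply: contraT; rewrite negbK => sxc.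
have ecx : ~~ e c x by rewrite esym.
have gP : good (c |: [set x]) by apply: good2.
have LP : Lset (c |: [set x]) = 3 by move: sxc; rewrite /sg L2 => /eqP.
have h2 : 2 <= Lset (c |: [set x]) by rewrite LP.
have := count_nb gP h2.
have -> : [set c0 | [&& c0 \notin c |: [set x], good (c0 |: (c |: [set x])) &
    Lset (c0 |: (c |: [set x])) == (Lset (c |: [set x])).-1]] = set0.
  apply/setP => c'; rewrite inE [in RHS]inE; apply/negP => /and3P [cR gc Lc].
  have xR : x \in c |: [set x] by rewrite !inE eqxx !orbT.
  have ec'c : ~~ e c' c by apply: (goodU1_inv gc); rewrite setU11.
  have ec'x : ~~ e c' x by apply: (goodU1_inv gc).
  move: Lc; rewrite downE // (chain (erefl _) gP xR cR gc) => Lc.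
  move: cR; rewrite !inE !negb_or => /andP [c'c c'x].
  have c'Y : c' \in Yx x by rewrite YxE c'x [e x c']esym ec'x Lc.
  have [h1 h2'] := L2b L2 c'Y.
  have sc'x : sg c' x = false.
    by rewrite /sg setUC h1 h2'.
  have cc' : c != c' by rewrite eq_sym.
  have xc : x != c by rewrite eq_sym.
  have xc' : x != c' by rewrite eq_sym.
  have ecc' : ~~ e c c' by rewrite esym.
  have h : sg c x = false by rewrite (consist cc' xc xc' ecc' ecx ec'x).
  have c1 : x \notin [set c] by rewrite inE eq_sym.
  have gxc : good (x |: [set c]) by apply: good2.
  have := upD (good1 c) c1 gxc (negbT h); rewrite setUC LP => h4.
  by have := le2 c; rewrite h4.
rewrite cards0 addn0 => h.
have : #|[set b in c |: [set x] | good ((c |: [set x]) :\ b) &&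
   (Lset ((c |: [set x]) :\ b) == (Lset (c |: [set x])).-1)]| <= #|c |: [set x]|.
  by apply: subset_leq_card; apply/subsetP => b; rewrite inE => /andP [].
by rewrite h LP cardsU1 cards1 inE cx.
Qed.


Definition Qv (u : V) : bool :=
  ((#|val u| == 1) && (L u == 2)) || ((#|val u| == 2) && (L u == 1)).
Definition parV (u : V) : bool := odd #|val u|.

Lemma adjV_sym : symmetric (@IAR_adj T e).
Proof. by move=> u v; rewrite !adjV adjSC. Qed.

Lemma adjV_irr : irreflexive (@IAR_adj T e).
Proof. by move=> u; rewrite adjV /adjS setDv setU0 cards0. Qed.

Lemma parV_adj u v : IAR_adj u v -> parV u != parV v.
Proof.
rewrite adjV /parV => /adjS_card [] ->; rewrite /=; by case: (odd _).
Qed.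

Lemma goodV (u : V) : good (val u).
Proof. exact: valP u. Qed.

Lemma HQ u : Qv u -> exists a b, [/\ a != b, IAR_adj u a, IAR_adj u b,
   (forall w, IAR_adj u w -> w = a \/ w = b) & (Qv a /\ Qv b)].
Proof.
case/orP => /andP [/eqP cu /eqP Lu].
- have [x ex] := cards1P (introT eqP cu).
  have L2 : Lset [set x] = 2 by rewrite -ex LsetE.
  have := Ysize (_ : 2 <= Lset [set x]); rewrite L2 => /(_ isT) /eqP /cards2P [y1 [y2 [y12 eY]]].
  have y1Y : y1 \in Yx x by rewrite eY !inE eqxx.
  have y2Y : y2 \in Yx x by rewrite eY !inE eqxx orbT.
  have [y1x exy1 _] := YxP y1Y; have [y2x exy2 _] := YxP y2Y.
  have ga : good (y1 |: [set x]) by apply: good2; rewrite esym.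
  have gb : good (y2 |: [set x]) by apply: good2; rewrite esym.
  exists (vx ga), (vx gb); split.
  + apply/eqP => /(congr1 val); rewrite !vxK => h.
    have : y1 \in y2 |: [set x] by rewrite -h setU11.
    by rewrite !inE (negbTE y12) (negbTE y1x).
  + by rewrite adjV vxK ex adjS_U1 // inE.
  + by rewrite adjV vxK ex adjS_U1 // inE.
  + move=> w; rewrite adjV ex => /adjS_char [[c cx ew]|[b bx ew]].
    * have cN : c \in Nx x.
        rewrite inE; move: cx; rewrite inE => -> /=.
        by apply: good2_inv; rewrite -ew goodV.
      have := L2a L2 cN; rewrite eY !inE => /orP [] /eqP ec; [left|right];
        apply: val_inj; by rewrite vxK ew ec.
    * exfalso; move: bx; rewrite inE => /eqP eb.
      have := goodV w; rewrite ew eb setDv /good eqxx andbF.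
      by [].
  + by rewrite /Qv !vxK !Lvx (proj1 (L2b L2 y1Y)) (proj1 (L2b L2 y2Y))
      !cardsU1 !cards1 !inE y1x y2x !orbT.
- move: (cu) => /eqP /cards2P [x [y [xy ex]]].
  have gu := goodV u; rewrite ex in gu.
  have exy : ~~ e x y by apply: (goodU1_inv gu); rewrite inE.
  have L1 : Lset (x |: [set y]) = 1 by rewrite -ex LsetE Lu.
  have yx : y != x by rewrite eq_sym.
  have y1 : y \notin [set x] by rewrite inE.
  have gyx : good (y |: [set x]) by rewrite setUC.
  have Lx : Lset [set x] = 2.
    have h := Lstep (good1 x) y1 gyx; rewrite setUC L1 in h.
    have := Lpos (good1 x); clear -h; lia.
  have x1 : x \notin [set y] by rewrite inE.
  have Ly : Lset [set y] = 2.
    have h := Lstep (good1 y) x1 gu; rewrite L1 in h.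
    have := Lpos (good1 y); clear -h; lia.
  exists (vx (good1 x)), (vx (good1 y)); split.
  + apply/eqP => /(congr1 val); rewrite !vxK => /setP /(_ x); rewrite !inE eqxx.
    by rewrite (negbTE xy).
  + rewrite adjV vxK ex adjSC; rewrite setUC; apply: adjS_U1; by rewrite inE.
  + rewrite adjV vxK ex adjSC; apply: adjS_U1; by rewrite inE.
  + move=> w; rewrite adjV ex => /adjS_char [[c cx ew]|[b bx ew]].
    * exfalso.
      have gw := goodV w; rewrite ew in gw.
      move: cx; rewrite !inE negb_or => /andP [cx cy].
      have exc : ~~ e x c by rewrite esym; apply: (goodU1_inv gw); rewrite !inE eqxx.
      have ecy : ~~ e c y by apply: (goodU1_inv gw); rewrite !inE eqxx orbT.
      have cN : c \in Nx x by rewrite inE cx exc.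
      have yN : y \in Nx x by rewrite inE yx exy.
      have := L2c Lx (L2a Lx cN) (L2a Lx yN) cy.
      by rewrite (negbTE ecy).
    * move: bx; rewrite !inE => /orP [] /eqP eb; [right|left];
        apply: val_inj; rewrite vxK ew eb.
      - exact: (proj1 (pairD1 xy)).
      - exact: (proj2 (pairD1 xy)).
  + by rewrite /Qv !vxK !Lvx Lx Ly !cards1.
Qed.

Hypothesis Hcyc : forall v : V,
  ~ is_even_cycle (@IAR_adj T e) (component (@IAR_adj T e) v).

Lemma noQ u : ~~ Qv u.
Proof.
apply/negP => Qu.
exact: (Hcyc (even_cycle adjV_sym adjV_irr parV_adj HQ Qu)).
Qed.

Lemma L1x x : Lset [set x] = 1.
Proof.
have := le2 x; have := Lpos (good1 x).
case: (ltngtP (Lset [set x]) 2) => h; try lia.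
have := noQ (vx (good1 x)); rewrite /Qv vxK Lvx h cards1 //.
Qed.

Lemma sgT x c : c \in Nx x -> sg x c.
Proof.
rewrite inE => /andP [cx exc]; apply: contraT => ns.
have c1 : c \notin [set x] by rewrite inE.
have g : good (c |: [set x]) by apply: good2; rewrite esym.
have := upD (good1 x) c1 g ns; rewrite L1x; have := Lpos g; lia.
Qed.

Lemma Lcard S : good S -> Lset S = #|S|.
Proof.
move Hn : #|S| => n; elim: n S Hn => [|n IH] S cS gS.
  by move: gS; rewrite /good -cards_eq0 cS andbF.
case: n IH cS => [|n] IH cS.
  have /cards1P [x ex] : #|S| == 1 by rewrite cS.
  by rewrite ex L1x.
have [x xS] : exists x, x \in S.
  by apply/set0Pn; case/andP: gS.
have : 0 < #|S :\ x| by move: cS; rewrite (cardsD1 x S) xS; clear; lia.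
move=> /card_gt0P [c]; rewrite !inE => /andP [cx cS0].
set S' := S :\ c.
have eS : S = c |: S' by rewrite setD1K.
have xS' : x \in S' by rewrite !inE eq_sym cx.
have gS' : good S' by apply: good_sub gS (subsetDl _ _) _; apply/set0Pn; exists x.
have cS' : c \notin S' by rewrite !inE eqxx.
have cardS' : #|S'| = n.+1 by move: cS; rewrite (cardsD1 c S) cS0 add1n => -[].
have gcS : good (c |: S') by rewrite -eS.
have := chain (erefl _) gS' xS' cS' gcS.
rewrite sgT; last first.
  rewrite inE cx /=; case/goodP: gS => H _; exact: H.
move=> /eqP; rewrite -eS => ->; by rewrite (IH S' cardS' gS').
Qed.

End Main.



Theorem lemma4p4 (T : finType) (e : rel T) (HG : simple_graph e)
  (Hcyc : forall v : IAR_vert e,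
            ~ is_even_cycle (@IAR_adj T e) (component (@IAR_adj T e) v)) :
  forall (p : nat) (L : IAR_vert e -> nat),
    is_layering (@IAR_adj T e) p L <->
    (p = alpha e /\ forall A : IAR_vert e, L A = #|val A|).
Proof.
case: HG => esym eirr.
move=> p L; split.
- move=> HL.
  have HA : forall A : IAR_vert e, L A = #|val A|.
    move=> A; rewrite -(LsetE L A).
    exact: (Lcard esym eirr HL Hcyc (goodV0 A)).
  split=> //.
  have [H1 [Hne _]] := HL.
  apply/eqP; rewrite eqn_leq; apply/andP; split.
  + case: p H1 Hne HL => [//|p'] H1 Hne _.
    have [v Lv] := Hne p'.+1 (leqnn _).
    rewrite -Lv HA; apply: alpha_ge; by case/andP: (goodV0 v).
  + have [A0 iA0 ->] := alpha_spec e.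
    case: (boolP (A0 == set0)) => [/eqP -> | nA0]; first by rewrite cards0.
    have g : good e A0 by rewrite /good iA0 nA0.
    by have := H1 (vx g); rewrite HA vxK => /andP [_ ->].
- move=> [-> HA].
  have -> : L = (fun A => #|val A|) by apply: functional_extensionality.
  exact: natural.
Qed.
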